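(* Let $G$ be a conference graph of order $v > 9$, i.e. a strongly regular graph with parameters $(v,k,\lambda,\mu) = \left(v, \frac{v-1}{2}, \frac{v-5}{4}, \frac{v-1}{4}\right)$. Then $G$ is optimistic: the distance matrix $D(G)$ has strictly more positive eigenvalues than negative eigenvalues, i.e. $n_{+}(G) > n_{-}(G)$.
   Context: For a connected graph $G$, the distance matrix $D(G)$ is the matrix indexed by vertices whose $(u,w)$ entry is the graph distance $d(u,w)$. $n_{+}(G)$ and $n_{-}(G)$ denote the number of strictly positive and strictly negative eigenvalues of $D(G)$ (counted with multiplicity). A graph is called optimistic if $n_{+}(G) > n_{-}(G)$. A strongly regular graph with parameters $(v,k,\lambda,\mu)$ is a $k$-regular graph on $v$ vertices in which every pair of adjacent vertices has exactly $\lambda$ common neighbours and every pair of distinct non-adjacent vertices has exactly $\mu$ common neighbours. *)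

(* Defs.v *)
From HB Require Import structures.
From mathcomp Require Import all_boot all_order all_algebra.
From mathcomp Require Import polyorder polyrcf.
Set Implicit Arguments. Unset Strict Implicit. Unset Printing Implicit Defensive.
Import Order.TTheory GRing.Theory Num.Theory.

Definition simple_graph (T : finType) (adj : rel T) : Prop :=
  symmetric adj /\ irreflexive adj.

Definition connected_graph (T : finType) (adj : rel T) : Prop :=
  forall u w : T, connect adj u w.

Definition walkn (T : finType) (adj : rel T) (n : nat) (u w : T) : bool :=
  [exists p : n.-tuple T, path adj u p && (last u p == w)].

(* Graph distance: least n with a walk of length n (searched in [0, #|T|),
   which suffices for connected graphs). *)
Definition gdist (T : finType) (adj : rel T) (u w : T) : nat :=
  find (fun n => walkn adj n u w) (iota 0 #|T|).

Definition dist_matrix (R : nzRingType) (T : finType) (adj : rel T)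
  : 'M[R]_#|T| :=
  \matrix_(i, j) ((gdist adj (enum_val i) (enum_val j))%:R)%R.

Definition n_pos (R : rcfType) (n : nat) (A : 'M[R]_n) : nat :=
  \sum_(x <- rootsR (char_poly A) | (0 < x)%R) multiplicity x (char_poly A).
Definition n_neg (R : rcfType) (n : nat) (A : 'M[R]_n) : nat :=
  \sum_(x <- rootsR (char_poly A) | (x < 0)%R) multiplicity x (char_poly A).

Definition optimistic (R : rcfType) (T : finType) (adj : rel T) : Prop :=
  n_neg (dist_matrix R adj) < n_pos (dist_matrix R adj).

Definition strongly_regular (T : finType) (adj : rel T)
  (v k lam mu : nat) : Prop :=
  [/\ simple_graph adj, #|T| = v,
      (forall x : T, #|[set y | adj x y]| = k),
      (forall x y : T, adj x y -> #|[set z | adj x z && adj y z]| = lam) &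
      (forall x y : T, x != y -> ~~ adj x y ->
          #|[set z | adj x z && adj y z]| = mu)].

(* Main.v *)
Require Import Defs.
From HB Require Import structures.
From mathcomp Require Import all_boot all_order all_algebra.
From mathcomp Require Import polyorder polyrcf.
From mathcomp Require Import ring lra zify.
From Stdlib Require Import Lia.
Set Implicit Arguments. Unset Strict Implicit. Unset Printing Implicit Defensive.
Import Order.TTheory GRing.Theory Num.Theory.
Local Open Scope ring_scope.
Section Cnt.
Variable R : rcfType.

Lemma mu_prodX (I : Type) (r : seq I) (d : I -> R) x :
  multiplicity x (\prod_(i <- r) ('X - (d i)%:P)) = (\sum_(i <- r) (d i == x))%N.
Proof.
elim: r => [|i r IH]; first by rewrite !big_nil -polyC1 mu_polyC.
rewrite !big_cons mu_mul; last first.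
  by rewrite mulf_neq0 ?polyXsubC_eq0 // monic_neq0 // monic_prod_XsubC.
rewrite IH; congr (_ + _)%N; case: eqP => [->|/eqP ne]; first by rewrite mu_XsubC.
by rewrite muNroot // root_XsubC eq_sym.
Qed.

Lemma count_rootsR n (d : 'I_n -> R) (P : pred R) :
  (\sum_(x <- rootsR (\prod_i ('X - (d i)%:P)) | P x)
      multiplicity x (\prod_i ('X - (d i)%:P)))%N = #|[pred i | P (d i)]|.
Proof.
set p := \prod_i _.
have p0 : p != 0 by rewrite monic_neq0 // monic_prod_XsubC.
have mem_d i : d i \in rootsR p.
  rewrite -(roots_on_rootsR p0) /= -mu_gt0 // /p mu_prodX.
  by rewrite (bigD1 i) //= eqxx.
under eq_bigr do rewrite /p mu_prodX.
rewrite exchange_big /= -sum1_card [RHS]big_mkcond /=.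

apply: eq_bigr => i _.
rewrite (big_rem (d i)) ?mem_d //= eqxx inE.
rewrite big1_seq ?addn0; first by case: (P (d i)).
move=> x /andP[_ xr]; apply/eqP; rewrite eqb0; apply/eqP => ex.
rewrite -ex in xr.
have := uniq_roots (- cauchy_bound p) (cauchy_bound p) p.
rewrite -/(rootsR p) (perm_uniq (perm_to_rem (mem_d i))) /= xr //.

Qed.
End Cnt.
Lemma char_poly_uconj (F : fieldType) n (Q A : 'M[F]_n) : Q \in unitmx ->
  char_poly (Q *m A *m invmx Q) = char_poly A.
Proof.
move=> Qu.
set fQ := map_mx (@polyC F) Q; set fQi := map_mx (@polyC F) (invmx Q).
have e1 : fQ *m fQi = 1%:M by rewrite -map_mxM mulmxV // map_mx1.
have e2 : fQi *m fQ = 1%:M by rewrite -map_mxM mulVmx // map_mx1.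
rewrite /char_poly.
have -> : char_poly_mx (Q *m A *m invmx Q) = fQ *m char_poly_mx A *m fQi.
  rewrite /char_poly_mx !map_mxM mulmxBr mulmxBl -/fQ -/fQi.
  by rewrite mul_mx_scalar -scalemxAl e1 scalemx1.
rewrite !det_mulmx mulrC mulrA -det_mulmx e2 det1 mul1r //.
Qed.

Lemma diag_decomp (F : fieldType) N (D : 'M[F]_N) (t a b : F) :
  uniq [:: t; a; b] ->
  (D - t%:M) *m ((D - a%:M) *m (D - b%:M)) = 0 ->
  exists d : 'I_N -> F, [/\ char_poly D = \prod_i ('X - (d i)%:P),
    (forall i, [|| d i == t, d i == a | d i == b]),
    \tr D = \sum_i d i & \tr (D *m D) = \sum_i d i ^+ 2].
Proof.
case: N D => [|N] D U hp.
  exists (fun _ => 0); split.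
  - by rewrite /char_poly big_ord0 det_mx00.
  - by move=> [].
  - by rewrite /mxtrace !big_ord0.
  - by rewrite /mxtrace !big_ord0.
pose p := \prod_(x <- [:: t; a; b]) ('X - x%:P).
have hpD : horner_mx D p = 0.
  rewrite /p !big_cons big_nil !rmorphM /= !rmorphB /= !horner_mx_X !horner_mx_C.
  by rewrite rmorph1 mulr1; exact: hp.
have : diagonalizable D.
  apply/diagonalizableP; exists [:: t; a; b] => //.
  exact: mxminpoly_min.
move=> [P Pu /(similar_diagLR Pu)[d]].
rewrite conjVmx // => eD.
exists (fun i => d 0 i); split.
- have -> : D = invmx P *m diag_mx d *m invmx (invmx P) by rewrite invmxK.
  rewrite char_poly_uconj ?unitmx_inv // char_poly_trig //.
  by apply: eq_bigr => i _; rewrite mxE eqxx.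
- move=> i.
  have := hpD; rewrite eD horner_mx_uconjC // horner_mx_diag => h0.
  have : diag_mx (map_mx (horner p) d) = 0.
    have -> : diag_mx (map_mx (horner p) d) =
       P *m (invmx P *m diag_mx (map_mx (horner p) d) *m P) *m invmx P.
      by rewrite !mulmxA (mulmxV Pu) mul1mx -mulmxA (mulmxV Pu) mulmx1.
    by rewrite h0 mulmx0 mul0mx.
  move/matrixP/(_ i i); rewrite !mxE eqxx /= mulr1n => /eqP.
  rewrite -/(root p (d 0 i)) /p root_prod_XsubC !inE.
  by [].
- by rewrite eD -mulmxA mxtrace_mulC -mulmxA (mulmxV Pu) mulmx1 mxtrace_diag.
- rewrite eD -!mulmxA [P *m (invmx P *m _)]mulmxA (mulmxV Pu) mul1mx.
  rewrite !mulmxA mxtrace_mulC !mulmxA (mulmxV Pu) mul1mx.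
  rewrite mul_diag_mx /mxtrace; apply: eq_bigr => i _.
  by rewrite !mxE eqxx mulr1n expr2.
Qed.
Lemma card_sum (n : nat) (P : pred 'I_n) : #|P| = (\sum_i (P i : nat))%N.
Proof.
rewrite -sum1_card big_mkcond /=; apply: eq_bigr => i _.
by rewrite unfold_in; case: (P i).
Qed.

Lemma alg_core (R : realFieldType) (x y z K s : R) :
  s ^+ 2 = 2 * K + 1 -> 0 < s -> 4 < K ->
  x + y + z = 2 * K + 1 ->
  3 * K * x + (-3 - s) / 2 * y + (-3 + s) / 2 * z = 0 ->
  9 * K ^+ 2 * x + ((-3 - s) / 2) ^+ 2 * y + ((-3 + s) / 2) ^+ 2 * z
     = 5 * K * (2 * K + 1) ->
  y < x + z.
Proof.
move=> hs s0 K4 L1 L2 L3.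
have c0 : 36 * K ^+ 2 + 34 * K + 8 != 0 by rewrite gt_eqF //; nra.
have hx : x = 1.
  have e : (36 * K ^+ 2 + 34 * K + 8) * (x - 1) = 0.
    have e' : (36 * K ^+ 2 + 34 * K + 8) * (x - 1) =
      4 * (9 * K ^+ 2 * x + ((-3 - s) / 2) ^+ 2 * y + ((-3 + s) / 2) ^+ 2 * z
        - 5 * K * (2 * K + 1))
      + 12 * (3 * K * x + (-3 - s) / 2 * y + (-3 + s) / 2 * z)
      - (s ^+ 2 - (2 * K + 1)) * (y + z)
      - (2 * K - 8) * (x + y + z - (2 * K + 1)) by field.
    by rewrite e' L3 L2 hs L1 !subrr; ring.
  by move/eqP: e; rewrite mulf_eq0 (negPf c0) /= subr_eq0 => /eqP.
have hyz : y + z = 2 * K by lra.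
have e2 : s * (z - y) = 0.
  have e' : s * (z - y) = 2 * (3 * K * x + (-3 - s) / 2 * y + (-3 + s) / 2 * z)
     - 6 * K * (x - 1) + 3 * (y + z - 2 * K) by field.
  by rewrite e' L2 hx hyz; ring.
move/eqP: e2; rewrite mulf_eq0 gt_eqF //= subr_eq0 => /eqP ->.
lra.
Qed.

Lemma count_final (R : rcfType) N k (d : 'I_N -> R) :
  N = (2 * k + 1)%N -> (4 < k)%N ->
  let s := Num.sqrt (N%:R : R) in
  (forall i, [|| d i == (3 * k%:R)%R, d i == ((-3 - s) / 2)%R | d i == ((-3 + s) / 2)%R]) ->
  \sum_i d i = 0 -> \sum_i d i ^+ 2 = (5 * k * N)%:R ->
  (#|[pred i | (d i < 0)%R]| < #|[pred i | (0 < d i)%R]|)%N.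
Proof.
move=> hN k4 s hd S1 S2.
have s2 : s ^+ 2 = N%:R by rewrite sqr_sqrtr // ler0n.
have Kr : 4 < (k%:R : R) by rewrite ltr_nat.
have hN' : (N%:R : R) = 2 * k%:R + 1 by rewrite hN natrD natrM.
clear k4.
have s3 : 3 < s.
  have s0 : 0 <= s by rewrite sqrtr_ge0.
  nra.
pose t : R := 3 * k%:R; pose a : R := (-3 - s) / 2; pose b : R := (-3 + s) / 2.
have ta : t != a by rewrite /t /a; apply/eqP => h; clear -h Kr s3 s2 hN'; nra.
have tb : t != b by rewrite /t /b; apply/eqP => h; clear -h Kr s3 s2 hN'; nra.
have ab : a != b by rewrite /a /b; apply/eqP => h; clear -h Kr s3 s2 hN'; nra.
pose x := (\sum_i (d i == t : nat))%N.
pose y := (\sum_i (d i == a : nat))%N.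
pose z := (\sum_i (d i == b : nat))%N.
have split_sum (f : R -> R) :
    \sum_i f (d i) = x%:R * f t + y%:R * f a + z%:R * f b.
  rewrite /x /y /z !natr_sum !big_distrl -!big_split /=.
  apply: eq_bigr => i _.
  have := hd i; rewrite -/t -/a -/b.
  case/or3P => /eqP ->.
  - by rewrite eqxx (negPf ta) (negPf tb) !mul0r !addr0 mul1r.
  - by rewrite eqxx eq_sym (negPf ta) (negPf ab) !mul0r add0r addr0 mul1r.
  - by rewrite eqxx eq_sym (negPf tb) eq_sym (negPf ab) !mul0r !add0r mul1r.
have E1 := split_sum (fun _ => 1).
have E2 := split_sum id.
have E3 := split_sum (fun r => r ^+ 2).
rewrite /= sumr_const card_ord !mulr1 in E1.
rewrite /= S1 in E2; rewrite /= S2 in E3.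
have hlt : (y%:R : R) < x%:R + z%:R.
  apply: (@alg_core R x%:R y%:R z%:R k%:R s).
  - by rewrite s2.
  - lra.
  - exact: Kr.
  - by rewrite -hN' E1.
  - by rewrite [RHS]E2 /t /a /b; ring.
  - have -> : 5 * k%:R * (2 * k%:R + 1) = (5 * k * N)%:R :> R.
      by rewrite hN !natrM natrD natrM.
    by rewrite E3 /t /a /b; ring.
have hneg : #|[pred i | d i < 0]| = y.
  rewrite card_sum; apply: eq_bigr => i _.
  have := hd i; rewrite -/t -/a -/b /=.
  case/or3P => /eqP ->; rewrite ?eqxx ?(negPf ta) ?(negPf ab) ?(negPf tb).
  - suff -> : (t < 0) = false by [].
    by apply: negbTE; rewrite -leNgt /t; lra.
  - suff -> : (a < 0) = true by [].
    by rewrite /a; lra.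
  - rewrite eq_sym (negPf ab); suff -> : (b < 0) = false by [].
    by apply: negbTE; rewrite -leNgt /b; lra.
have hpos : #|[pred i | 0 < d i]| = (x + z)%N.
  rewrite card_sum -big_split /=; apply: eq_bigr => i _.
  have := hd i; rewrite -/t -/a -/b /=.
  case/or3P => /eqP ->; rewrite ?eqxx ?(negPf ta) ?(negPf ab) ?(negPf tb).
  - suff -> : (0 < t) = true by [].
    by rewrite /t; lra.
  - rewrite eq_sym (negPf ta); suff -> : (0 < a) = false by [].
    by apply: negbTE; rewrite -leNgt /a; lra.
  - rewrite eq_sym (negPf tb); suff -> : (0 < b) = true by [].
    by rewrite /b; lra.
rewrite hneg hpos -(ltr_nat R) natrD; exact: hlt.
Qed.
Lemma mx_alg (R : fieldType) n (A J : 'M[R]_n) (K a b : R) :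
  A *m A = K%:M + (K / 2 - 1) *: A + (K / 2) *: (J - 1%:M - A) ->
  A *m J = K *: J -> J *m A = K *: J -> J *m J = (2 * K + 1) *: J ->
  a + b = -3 -> a * b = (4 - K) / 2 -> (2 : R) != 0 ->
  let D := 2 *: (J - 1%:M) - A in
  D *m D = (4 * K + 2 + K / 2) *: J - 3 *: D - ((4 - K) / 2)%:M /\
  (D - (3 * K)%:M) *m ((D - a%:M) *m (D - b%:M)) = 0.
Proof.
move=> hAA hAJ hJA hJJ hab hab' two D.
have hDD : D *m D = (4 * K + 2 + K / 2) *: J - 3 *: D - ((4 - K) / 2)%:M.
  rewrite /D !mulmxBl !mulmxBr -!scalemxAl -!scalemxAr !mulmxBl !mulmxBr.
  rewrite !mul1mx !mulmx1 hAA hAJ hJA hJJ.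
  apply/matrixP => i j; rewrite !mxE.
  by field.
split => //.
have e1 : (D - a%:M) *m (D - b%:M) = D *m D - (a + b) *: D + (a * b)%:M.
  rewrite !mulmxBl !mulmxBr !mul_mx_scalar !mul_scalar_mx.
  apply/matrixP => i j; rewrite !mxE; ring.
have e2 : (D - a%:M) *m (D - b%:M) = (4 * K + 2 + K / 2) *: J.
  rewrite e1 hab hab' hDD.
  apply/matrixP => i j; rewrite !mxE; ring.
have e3 : D *m J = (3 * K) *: J.
  rewrite /D !mulmxBl -!scalemxAl !mulmxBl mul1mx hJJ hAJ.
  apply/matrixP => i j; rewrite !mxE; by field.
rewrite e2 -scalemxAr mulmxBl e3 mul_scalar_mx subrr scaler0 //.
Qed.
Local Close Scope ring_scope.
Section G.
Variables (T : finType) (adj : rel T).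

Lemma walkn0 u w : walkn adj 0 u w = (u == w).
Proof.
apply/existsP/eqP => [[p]|->]; first by rewrite (tuple0 p) /= => /eqP.
by exists [tuple]; rewrite /= eqxx.
Qed.

Lemma walkn1 u w : walkn adj 1 u w = adj u w.
Proof.
apply/existsP/idP => [[p]|h].
  by case/tupleP: p => x p; rewrite (tuple0 p) /= andbT => /andP[h /eqP <-].
by exists [tuple w]; rewrite /= h eqxx.
Qed.

Lemma walkn2 u z w : adj u z -> adj z w -> walkn adj 2 u w.
Proof. by move=> h1 h2; apply/existsP; exists [tuple z; w]; rewrite /= h1 h2 eqxx. Qed.

Lemma gdist_val m u w : #|T| = m.+3 ->
  (u != w -> ~~ adj u w -> exists z, adj u z && adj z w) ->
  gdist adj u w = if u == w then 0 else if adj u w then 1 else 2.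
Proof.
move=> hT hz; rewrite /gdist hT /= walkn0.
case: eqP => [//|/eqP uw]; rewrite walkn1.
case: ifP => [//|/negbT na].
have [z /andP[h1 h2]] := hz uw na.
by rewrite (walkn2 h1 h2).
Qed.
End G.

Local Open Scope ring_scope.
Lemma sum_bool_card (T : finType) (P : pred T) :
  (\sum_(z : T) (P z : nat))%N = #|[set z | P z]|.
Proof.
rewrite -sum1_card [RHS]big_mkcond /=; apply: eq_bigr => z _.
by rewrite inE; case: (P z).
Qed.

Lemma sum_enum_bool (R : nzRingType) (T : finType) (P : pred T) :
  (\sum_(i < #|T|) ((P (enum_val i) : nat)%:R : R))%R = (#|[set z | P z]|%:R)%R.
Proof.
rewrite -sum_bool_card natr_sum.
by rewrite (big_enum_val (A := T) (fun z => ((P z : nat)%:R : R))).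
Qed.

Local Close Scope ring_scope.
Theorem theorem1 (R : rcfType) (T : finType) (adj : rel T) (v k lam mu : nat) :
  strongly_regular adj v k lam mu ->
  2 * k + 1 = v -> 4 * lam + 5 = v -> 4 * mu + 1 = v ->
  9 < v ->
  connected_graph adj ->
  optimistic R adj.
Proof.
move=> [[sym irr] hT hk hl hm] e1 e2 e3 v9 _.
have hkm : k = (2 * mu)%N by lia.
have hlm : lam = mu.-1 by lia.
have [m hm3] : exists m, #|T| = m.+3 by exists (v - 3); lia.
have hzz u w : u != w -> ~~ adj u w -> exists z, adj u z && adj z w.
  move=> uw na; have := hm u w uw na.
  have : (0 < mu)%N by lia.
  move=> mu0 hc; have : (0 < #|[set z | adj u z && adj w z]|)%N by rewrite hc.
  case/card_gt0P => z; rewrite inE => /andP[h1 h2].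
  by exists z; rewrite h1 sym h2.
have gd u w := @gdist_val T adj m u w hm3 (hzz u w).
Local Open Scope ring_scope.
pose N := #|T|.
pose A : 'M[R]_N := \matrix_(i, j) (adj (enum_val i) (enum_val j))%:R.
pose J : 'M[R]_N := const_mx 1.
pose K : R := k%:R.
have evE (i j : 'I_N) : (enum_val i == enum_val j) = (i == j).
  exact: (inj_eq enum_val_inj).
have hD : dist_matrix R adj = 2 *: (J - 1%:M) - A.
  apply/matrixP => i j; rewrite !mxE gd evE.
  case: (eqVneq i j) => [->|ij] /=.
    by rewrite irr subrr mulr0 subr0.
  case: (adj _ _) => /=.
  - by ring.
  - by ring.
have hAA : A *m A = K%:M + (K / 2 - 1) *: A + (K / 2) *: (J - 1%:M - A).
  apply/matrixP => i j; rewrite !mxE.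
  under eq_bigr do rewrite !mxE -natrM mulnb.
  rewrite (sum_enum_bool R (fun z => adj (enum_val i) z && adj z (enum_val j))).
  have e : [set z | adj (enum_val i) z && adj z (enum_val j)] =
           [set z | adj (enum_val i) z && adj (enum_val j) z].
    by apply/setP => z; rewrite !inE (sym z).
  rewrite e.
  case: (eqVneq i j) => [<-|ij] /=.
    have e' : [set z | adj (enum_val i) z && adj (enum_val i) z] =
              [set z | adj (enum_val i) z] by apply/setP => z; rewrite !inE andbb.
    rewrite e' hk irr /K /=; by field.
  case: (boolP (adj (enum_val i) (enum_val j))) => h.
    rewrite hl //= /K hkm hlm.
    have : (0 < mu)%N by lia.
    case: (mu) => [//|mu'] _ /=.
    by rewrite natrM -addn1 natrD; field.
  rewrite hm // ?evE //= /K hkm natrM; by field.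
have hAJ : A *m J = K *: J.
  apply/matrixP => i j; rewrite !mxE.
  under eq_bigr do rewrite !mxE mulr1.
  rewrite (sum_enum_bool R (fun z => adj (enum_val i) z)) hk /K; by rewrite mulr1.
have hJA : J *m A = K *: J.
  apply/matrixP => i j; rewrite !mxE.
  under eq_bigr do rewrite !mxE mul1r sym.
  rewrite (sum_enum_bool R (fun z => adj (enum_val j) z)) hk /K; by rewrite mulr1.
have hJJ : J *m J = (2 * K + 1) *: J.
  apply/matrixP => i j; rewrite !mxE.
  under eq_bigr do rewrite !mxE mulr1.
  rewrite sumr_const card_ord /N hT -e1 /K natrD natrM mulr1; by [].
pose s : R := Num.sqrt (N%:R).
pose t : R := 3 * K; pose a : R := (-3 - s) / 2; pose b : R := (-3 + s) / 2.
have hN : N = (2 * k + 1)%N by rewrite /N hT e1.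
have k4 : (4 < k)%N by lia.
have Kr : 4 < K by rewrite /K ltr_nat.
have hN' : (N%:R : R) = 2 * K + 1 by rewrite hN natrD natrM.
have s2 : s ^+ 2 = N%:R by rewrite sqr_sqrtr // ler0n.
have s3 : 3 < s.
  have s0 : 0 <= s by rewrite sqrtr_ge0.
  clear -s0 s2 hN' Kr; nra.
have ta : t != a by rewrite /t /a; apply/eqP => h; clear -h Kr s3 s2 hN'; nra.
have tb : t != b by rewrite /t /b; apply/eqP => h; clear -h Kr s3 s2 hN'; nra.
have ab : a != b by rewrite /a /b; apply/eqP => h; clear -h Kr s3 s2 hN'; nra.
have U : uniq [:: t; a; b] by rewrite /= !inE negb_or ta tb ab.
have hab : a + b = -3 by rewrite /a /b; field.
have hab' : a * b = (4 - K) / 2.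
  have -> : a * b = (9 - s ^+ 2) / 4 by rewrite /a /b; field.
  by rewrite s2 hN'; field.
have two : (2 : R) != 0 by rewrite pnatr_eq0.
have [hDD hp] := mx_alg hAA hAJ hJA hJJ hab hab' two.
rewrite -hD in hDD hp.
have [d [hcp hd htr htr2]] := diag_decomp U hp.
rewrite /optimistic /n_pos /n_neg hcp !count_rootsR.
apply: (count_final hN k4) => //.
- by rewrite -htr hD /mxtrace big1 // => i _; rewrite !mxE eqxx irr subrr mulr0 subr0.
- rewrite -htr2 hDD /mxtrace.
  under eq_bigr do rewrite !mxE eqxx.
  under eq_bigr do rewrite gd eqxx mulr1 mulr1n mulr0 subr0.
  rewrite sumr_const card_ord.
  by rewrite -mulr_natr !natrM -/K; field.
Qed.
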